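(* Consider the sequence of binary classification problems indexed by $m$ described in the context, with $N=n$, and suppose that $n=o(m)$, $m=o(n^2)$, and moreover $m=o(n^2/(\log n)^2)$ as $m\to\infty$. Let $\phi^F=\{\phi^F_m\}$ be the $\ell_2$-norm based classifier $\phi^F_m=\mathbb I\{F_n\ge 0\}$, where $$F_n=\Big\|\tfrac1n a^z-\tfrac1N a^x\Big\|_2^2-\Big\|\tfrac1n a^z-\tfrac1N a^y\Big\|_2^2 .$$ Then $J(\phi^F)=0$.
   Context: For each integer $m\ge1$ let $[m]=\{1,\dots,m\}$ be the alphabet. The sample sizes $N=N(m)$ and $n=n(m)$ are positive integers with $N,n\to\infty$ as $m\to\infty$. Fix constants $\varepsilon>0$ and $\bar c>0$ (a large positive constant). Let $\mathcal P_m$ be the set of pairs $(\pi,\mu)$ of probability distributions on $[m]$ with $\|\mu-\pi\|_1\ge\varepsilon$, $\max_j\pi_j\le \bar c/m$ and $\max_j\mu_j\le\bar c/m$. Two training sequences $X=(X_1,\dots,X_N)$ i.i.d. with marginal $\pi$ and $Y=(Y_1,\dots,Y_N)$ i.i.d. with marginal $\mu$, and a test sequence $Z=(Z_1,\dots,Z_n)$ i.i.d. with marginal $\nu$ are observed, the three sequences being independent; $\mathsf P_{(\pi,\mu,\nu)}$ denotes the corresponding probability. A classifier is a sequence $\phi=\{\phi_m\}$ of functions $\phi_m:[m]^N\times[m]^N\times[m]^n\to\{0,1\}$ (output $1$ means deciding that $Z$ comes from $\mu$). Its worst-case average probability of error is $$P_e(\phi_m)=\sup_{(\pi,\mu)\in\mathcal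 P_m}\Big[\tfrac12\mathsf P_{(\pi,\mu,\pi)}\{\phi_m=1\}+\tfrac12\mathsf P_{(\pi,\mu,\mu)}\{\phi_m=0\}\Big].$$ With $r(N,n,m)=\min\{N^2,Nn\}/m$, the generalized error exponent of $\phi$ is $J(\phi)=-\limsup_{m\to\infty}\frac{1}{r(N,n,m)}\log P_e(\phi_m)$. For $j\in[m]$, $a^x_j$, $a^y_j$, $a^z_j$ denote the number of times symbol $j$ appears in $X$, $Y$, $Z$ respectively, and $a^x=(a^x_j)_{j\in[m]}$ etc.; $\mathbb I$ is the indicator function. *)

(* Defs.v *)
From mathcomp Require Import all_boot all_order all_algebra.
From mathcomp Require Import all_classical all_reals all_analysis.
Set Implicit Arguments. Unset Strict Implicit. Unset Printing Implicit Defensive.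
Import Order.TTheory GRing.Theory Num.Theory.
Local Open Scope classical_set_scope.
Local Open Scope ring_scope.

(* A sequence of length L over the alphabet [m] = 'I_m (symbol j+1 <-> j). *)
Definition sample (L m : nat) := {ffun 'I_L -> 'I_m}.

Definition is_distr (R : realType) (m : nat) (p : 'I_m -> R) : Prop :=
  (forall j, 0 <= p j) /\ \sum_j p j = 1.

Definition seq_prob (R : realType) (m L : nat) (p : 'I_m -> R) (x : sample L m) : R :=
  \prod_(i < L) p (x i).

(* a classifier: for each m, a map [m]^N x [m]^N x [m]^n -> {0,1} (true = "from mu") *)
Definition classifier (N n : nat -> nat) :=
  forall m : nat, sample (N m) m -> sample (N m) m -> sample (n m) m -> bool.

Definition prob_event (R : realType) (m N n : nat) (pi mu nu : 'I_m -> R)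
  (E : sample N m -> sample N m -> sample n m -> bool) : R :=
  \sum_(x : sample N m) \sum_(y : sample N m) \sum_(z : sample n m)
     (if E x y z then seq_prob pi x * seq_prob mu y * seq_prob nu z else 0).

Definition admissible (R : realType) (m : nat) (eps cbar : R) (pi mu : 'I_m -> R) : Prop :=
  [/\ is_distr pi, is_distr mu, eps <= \sum_j `|mu j - pi j|,
      (forall j, pi j <= cbar / m%:R) & (forall j, mu j <= cbar / m%:R)].

Definition avg_err (R : realType) (N n : nat -> nat) (phi : classifier N n) (m : nat)
  (pi mu : 'I_m -> R) : R :=
  2^-1 * prob_event pi mu pi (fun x y z => phi m x y z)
  + 2^-1 * prob_event pi mu mu (fun x y z => ~~ phi m x y z).

(* worst-case average probability of error P_e(phi_m) (a bounded set, so sup is the true sup) *)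
Definition Pe (R : realType) (eps cbar : R) (N n : nat -> nat) (phi : classifier N n)
  (m : nat) : R :=
  sup [set e : R | exists pi mu : 'I_m -> R, admissible eps cbar pi mu /\ e = avg_err phi pi mu].

Definition rate (R : realType) (N n : nat -> nat) (m : nat) : R :=
  (minn (N m ^ 2) (N m * n m))%:R / m%:R.

(* (1/r) log P_e, with log 0 = -oo *)
Definition log_err_rate (R : realType) (eps cbar : R) (N n : nat -> nat)
  (phi : classifier N n) (m : nat) : \bar R :=
  let p := Pe eps cbar phi m in
  if 0 < p then (ln p / rate R N n m)%:E else -oo%E.

Definition J (R : realType) (eps cbar : R) (N n : nat -> nat) (phi : classifier N n) : \bar R :=
  (- limn_esup (log_err_rate eps cbar phi))%E.

Definition occ (L m : nat) (x : sample L m) (j : 'I_m) : nat := #|[set i | x i == j]|.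

Definition Fstat (R : realType) (m N n : nat) (x y : sample N m) (z : sample n m) : R :=
  \sum_j ((occ z j)%:R / n%:R - (occ x j)%:R / N%:R) ^+ 2
  - \sum_j ((occ z j)%:R / n%:R - (occ y j)%:R / N%:R) ^+ 2.

Definition phiF (R : realType) (N n : nat -> nat) : classifier N n :=
  fun m x y z => 0 <= Fstat R x y z.

(* Main.v *)
Require Import Defs.
From mathcomp Require Import all_boot all_order all_algebra.
From mathcomp Require Import all_classical all_reals all_analysis.
From mathcomp Require Import ring lra zify.
Import Order.TTheory GRing.Theory Num.Theory.
Local Open Scope classical_set_scope.
Local Open Scope ring_scope.
Set Implicit Arguments. Unset Strict Implicit. Unset Printing Implicit Defensive.

Section Prob.
Variable R : realType.
Variables (L m : nat).
Implicit Types (p : 'I_m -> R).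

Definition Ex p (f : sample L m -> R) := \sum_(x : sample L m) seq_prob p x * f x.

Lemma Eprod p (f : 'I_L -> 'I_m -> R) :
  Ex p (fun x => \prod_i f i (x i)) = \prod_(i < L) \sum_j p j * f i j.
Proof.
rewrite /Ex bigA_distr_bigA; apply: eq_bigr => x _; by rewrite /seq_prob -big_split.
Qed.

Lemma seq_prob_ge0 p (x : sample L m) : (forall j, 0 <= p j) -> 0 <= seq_prob p x.
Proof. by move=> h; apply: prodr_ge0 => i _. Qed.

Lemma Ex1 p : is_distr p -> Ex p (fun _ => 1) = 1.
Proof.
move=> [_ h1].
have -> : (fun _ : sample L m => (1:R)) = (fun x => \prod_(i < L) (fun _ _ => (1:R)) i (x i)).
  by apply: funext => x; rewrite big1.
by rewrite (Eprod p (fun _ _ => 1)) big1 // => i _; under eq_bigr do rewrite mulr1.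
Qed.

Lemma Ex_ind p i j : is_distr p -> Ex p (fun x => ((x i == j)%:R)) = p j.
Proof.
move=> [_ h1].
pose F := fun (i' : 'I_L) (v : 'I_m) => if i' == i then ((v == j)%:R : R) else 1.
have -> : (fun x : sample L m => ((x i == j)%:R : R)) =
   (fun x => \prod_(i' < L) F i' (x i')).
  apply: funext => x; rewrite (bigD1 i) //= /F eqxx big1 ?mulr1 // => i' /negbTE -> //.
have e : \sum_j0 p j0 * (j0 == j)%:R = p j.
  rewrite (bigD1 j) //= eqxx mulr1 big1 ?addr0 // => j' /negbTE ->; by rewrite mulr0.
rewrite (Eprod p F) (bigD1 i) //= /F eqxx e big1 ?mulr1 //.
by move=> i' /negbTE ->; under eq_bigr do rewrite mulr1.
Qed.

Lemma Ex_pair p i l j : i != l -> is_distr p ->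
  Ex p (fun x => ((x i == j)%:R * (x l == j)%:R)) = p j ^+ 2.
Proof.
move=> il [_ h1].
pose F := fun (i' : 'I_L) (v : 'I_m) => if (i' == i) || (i' == l) then ((v == j)%:R : R) else 1.
have -> : (fun x : sample L m => ((x i == j)%:R * (x l == j)%:R : R)) =
   (fun x => \prod_(i' < L) F i' (x i')).
  apply: funext => x; rewrite (bigD1 i) //= /F eqxx (bigD1 l) /=; last by rewrite eq_sym.
  rewrite eqxx orbT big1 ?mulr1 // => i' /andP[/negbTE -> /negbTE ->] //.
have e : \sum_j0 p j0 * (j0 == j)%:R = p j.
  rewrite (bigD1 j) //= eqxx mulr1 big1 ?addr0 // => j' /negbTE ->; by rewrite mulr0.
rewrite (Eprod p F) (bigD1 i) //= /F eqxx (bigD1 l) /=; last by rewrite eq_sym.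
rewrite eqxx orbT e big1 ?mulr1 ?expr2 //.
by move=> i' /andP[/negbTE -> /negbTE ->]; under eq_bigr do rewrite mulr1.
Qed.

Lemma Ex_lin p (f g : sample L m -> R) a b :
  Ex p (fun x => a * f x + b * g x) = a * Ex p f + b * Ex p g.
Proof.
rewrite /Ex !big_distrr -big_split /=; apply: eq_bigr => x _; rewrite /=; ring.
Qed.

Lemma Ex_sum p (I : finType) (f : I -> sample L m -> R) :
  Ex p (fun x => \sum_i f i x) = \sum_i Ex p (f i).
Proof.
rewrite /Ex exchange_big /=; apply: eq_bigr => x _; by rewrite big_distrr.
Qed.

Lemma Ex_le p (f g : sample L m -> R) : (forall j, 0 <= p j) ->
  (forall x, f x <= g x) -> Ex p f <= Ex p g.
Proof.
move=> hp h; apply: ler_sum => x _; apply: ler_wpM2l; [exact: seq_prob_ge0|exact: h].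
Qed.

Lemma occE (x : sample L m) j : (occ x j = \sum_i (x i == j))%N.
Proof.
rewrite /occ -sum1_card big_mkcond /=; apply: eq_bigr => i _; rewrite /in_mem /= /in_set /= asboolb; by case: (_ == _).
Qed.

Lemma occR (x : sample L m) j : ((occ x j)%:R : R) = \sum_i ((x i == j)%:R).
Proof. by rewrite occE natr_sum. Qed.

Lemma sum_occ (x : sample L m) : (\sum_j occ x j = L)%N.
Proof.
under eq_bigr do rewrite occE.
rewrite exchange_big /= -[RHS]card_ord -sum1_card; apply: eq_bigr => i _.
by rewrite (bigD1 (x i)) //= eqxx big1 // => j /negbTE; rewrite eq_sym => ->.
Qed.

End Prob.


Section Main.
Variables (R : realType) (n m : nat) (pi mu : 'I_m -> R) (c : R) (k : nat) (s0 : 'I_m).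
Hypotheses (dpi : is_distr pi) (dmu : is_distr mu).
Hypotheses (hpi : forall j, pi j <= c) (hmu : forall j, mu j <= c).
Hypotheses (kn : (k <= n)%N) (n0 : (0 < n)%N) (c0 : 0 < c).

Definition Aind (x : sample n m) : R := \prod_(i < n) (if (i < k)%N then ((x i == s0)%:R) else 1).
Definition SY (y : sample n m) : R := \sum_j (occ y j)%:R ^+ 2.
Definition SZX (x z : sample n m) : R := \sum_j (occ x j)%:R * (occ z j)%:R.

Lemma Aind01 x : Aind x = 0 \/ (Aind x = 1 /\ forall i : 'I_n, (i < k)%N -> x i = s0).
Proof.
case: (boolP [forall i : 'I_n, (i < k)%N ==> (x i == s0)]) => [/forallP h|/forallPn [i]].
  right; split; last by move=> i ik; have := h i; rewrite ik => /eqP.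
  by rewrite /Aind big1 // => i _; case: ifP => // ik; have := h i; rewrite ik => /= ->.
rewrite negb_imply => /andP [ik /negbTE xi]; left.
by rewrite /Aind (bigD1 i) //= ik xi mul0r.
Qed.

Lemma Aind_ge0 x : 0 <= Aind x.
Proof. by case: (Aind01 x) => [->|[-> _]]. Qed.
Lemma Aind_le1 x : Aind x <= 1.
Proof. by case: (Aind01 x) => [->|[-> _]]. Qed.

Lemma occ_s0 (x : sample n m) : (forall i : 'I_n, (i < k)%N -> x i = s0) -> (k <= occ x s0)%N.
Proof.
move=> h; rewrite occE.
have -> : k = (\sum_(i < n) (i < k : nat))%N.
  rewrite -[in LHS](card_ord k) -sum1_card (big_ord_widen n (fun _ => 1%N) kn) big_mkcond /=.
  by apply: eq_bigr => i _; case: ifP.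
apply: leq_sum => i _; case ik : (i < k)%N => //; by rewrite h // eqxx.
Qed.

Lemma sq_ge (x : sample n m) j : (occ x j <= occ x j ^ 2)%N.
Proof. by case: (occ x j) => // a; rewrite expnS leq_pmulr. Qed.

Lemma SX_nat (x : sample n m) :
  (occ x s0 ^ 2 + n <= \sum_j occ x j ^ 2 + occ x s0)%N.
Proof.
rewrite -[X in (_ + X <= _)%N](sum_occ x) (bigD1 s0) //= [(\sum_j occ x j ^ 2)%N](bigD1 s0) //=.
set a := occ x s0; set S1 := (\sum_(j | j != s0) occ x j)%N; set S2 := (\sum_(j | j != s0) occ x j ^ 2)%N.
suff : (S1 <= S2)%N by lia.
by apply: leq_sum => j _; apply: sq_ge.
Qed.


Lemma SY_ge (y : sample n m) : n%:R <= SY y.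
Proof.
rewrite /SY -{1}(sum_occ y) natr_sum; apply: ler_sum => j _.
by rewrite -natrX ler_nat sq_ge.
Qed.

Lemma SZX_ge0 (x z : sample n m) : 0 <= SZX x z.
Proof. by apply: sumr_ge0 => j _; apply: mulr_ge0. Qed.

Lemma Fexp (x y z : sample n m) :
  n%:R ^+ 2 * Fstat R x y z =
  \sum_j (occ x j)%:R ^+ 2 - SY y - 2 * SZX x z + 2 * \sum_j (occ y j)%:R * (occ z j)%:R.
Proof.
have nz : (n%:R : R) != 0 by rewrite pnatr_eq0 -lt0n.
rewrite /Fstat /SY /SZX mulrBr !big_distrr /= -!sumrB -big_split /=.
by apply: eq_bigr => j _; field.
Qed.

Lemma F_lb (x y z : sample n m) : Aind x = 1 ->
  (k * (k - 1))%:R - (SY y - n%:R + 2 * SZX x z) <= n%:R ^+ 2 * Fstat R x y z.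
Proof.
move=> hA; have hx : forall i : 'I_n, (i < k)%N -> x i = s0.
  by case: (Aind01 x) => [h|[_ //]]; rewrite hA in h; move/eqP: h; rewrite oner_eq0.
have ks := occ_s0 hx; have SX := SX_nat x.
have SXr : (k * (k - 1))%:R + n%:R <= \sum_j (occ x j)%:R ^+ 2 :> R.
  rewrite -natrD; under eq_bigr do rewrite -natrX; rewrite -natr_sum ler_nat.
  set a := occ x s0 in ks SX *.
  have : (k * (k - 1) <= a * (a - 1))%N by apply: leq_mul => //; apply: leq_sub2r.
  move: SX; set S := (\sum_j _)%N; nia.
rewrite Fexp.
have : 0 <= \sum_j (occ y j)%:R * (occ z j)%:R :> R by apply: sumr_ge0 => j _; apply: mulr_ge0.
lra.
Qed.


Definition T3 (G : sample n m -> sample n m -> sample n m -> R) : R :=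
  \sum_(x : sample n m) \sum_(y : sample n m) \sum_(z : sample n m)
     (seq_prob pi x * seq_prob mu y * seq_prob pi z) * G x y z.

Lemma T3_prod f g h : T3 (fun x y z => f x * g y * h z) = Ex pi f * Ex mu g * Ex pi h.
Proof.
rewrite /T3 /Ex -mulrA big_distrl /=; apply: eq_bigr => x _.
rewrite big_distrl big_distrr /=; apply: eq_bigr => y _.
rewrite !big_distrr /=; apply: eq_bigr => z _; ring.
Qed.

Lemma T3_lin a b G1 G2 : T3 (fun x y z => a * G1 x y z + b * G2 x y z) = a * T3 G1 + b * T3 G2.
Proof.
rewrite /T3 [a * _]mulr_sumr [b * _]mulr_sumr -[RHS]big_split /=; apply: eq_bigr => x _.
rewrite [a * _]mulr_sumr [b * _]mulr_sumr -[RHS]big_split /=; apply: eq_bigr => y _.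
rewrite [a * _]mulr_sumr [b * _]mulr_sumr -[RHS]big_split /=; apply: eq_bigr => z _; ring.
Qed.

Lemma T3_sum (G : 'I_m -> sample n m -> sample n m -> sample n m -> R) :
  T3 (fun x y z => \sum_j G j x y z) = \sum_j T3 (G j).
Proof.
rewrite /T3 [RHS]exchange_big /=; apply: eq_bigr => x _.
rewrite [RHS]exchange_big /=; apply: eq_bigr => y _.
rewrite [RHS]exchange_big /=; apply: eq_bigr => z _; by rewrite big_distrr.
Qed.

Lemma T3_le G1 G2 : (forall x y z, G1 x y z <= G2 x y z) -> T3 G1 <= T3 G2.
Proof.
case: dpi => p0 _; case: dmu => u0 _.
move=> h; apply: ler_sum => x _; apply: ler_sum => y _; apply: ler_sum => z _.
by apply: ler_wpM2l => //; rewrite !mulr_ge0 // seq_prob_ge0.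
Qed.

Lemma T3_event (E : sample n m -> sample n m -> sample n m -> bool) :
  prob_event pi mu pi E = T3 (fun x y z => (E x y z)%:R).
Proof.
rewrite /prob_event /T3; apply: eq_bigr => x _; apply: eq_bigr => y _; apply: eq_bigr => z _.
by case: (E x y z); rewrite ?mulr1 ?mulr0.
Qed.


Lemma Ex_A : Ex pi Aind = pi s0 ^+ k.
Proof.
case: dpi => p0 p1.
pose F := fun (i : 'I_n) (v : 'I_m) => if (i < k)%N then ((v == s0)%:R : R) else 1.
rewrite /Aind (Eprod pi F).
have -> : \prod_(i < n) \sum_j pi j * F i j = \prod_(i < n) (if (i < k)%N then pi s0 else 1).
  apply: eq_bigr => i _; rewrite /F; case: ifP => _.
    rewrite (bigD1 s0) //= eqxx mulr1 big1 ?addr0 // => j' /negbTE ->; by rewrite mulr0.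
  by under eq_bigr do rewrite mulr1.
rewrite -big_mkcond /= -(big_ord_widen n (fun _ => pi s0) kn).
by rewrite prodr_const card_ord.
Qed.

Lemma Ex_occ j : Ex pi (fun z : sample n m => (occ z j)%:R) = n%:R * pi j.
Proof.
under [X in Ex _ X]funext do rewrite occR.
rewrite (Ex_sum pi (fun i z => ((z i == j)%:R : R))).
under eq_bigr do rewrite Ex_ind //.
by rewrite sumr_const card_ord mulr_natl.
Qed.

Lemma Ex_ge0 p (f : sample n m -> R) : (forall j, 0 <= p j) -> (forall x, 0 <= f x) -> 0 <= Ex p f.
Proof. by move=> hp hf; apply: sumr_ge0 => x _; apply: mulr_ge0 => //; apply: seq_prob_ge0. Qed.

Lemma Ex_Aocc : \sum_j Ex pi (fun x => Aind x * (occ x j)%:R) = n%:R * Ex pi Aind.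
Proof.
rewrite -(Ex_sum pi (fun j x => Aind x * (occ x j)%:R)) /Ex mulr_sumr; apply: eq_bigr => x _.
by rewrite -mulr_sumr -natr_sum sum_occ; ring.
Qed.

Lemma Ex_SY : Ex mu SY <= n%:R + n%:R ^+ 2 * c.
Proof.
case: dmu => u0 u1.
have e : SY = fun y => \sum_j \sum_(i < n) \sum_(l < n) ((y i == j)%:R * (y l == j)%:R).
  apply: funext => y; rewrite /SY; apply: eq_bigr => j _.
  by rewrite occR expr2 mulr_suml; apply: eq_bigr => i _; rewrite mulr_sumr.
rewrite e (Ex_sum mu (fun j y => \sum_(i < n) \sum_(l < n) ((y i == j)%:R * (y l == j)%:R))).
under eq_bigr => j _ do rewrite (Ex_sum mu (fun i y => \sum_(l < n) ((y i == j)%:R * (y l == j)%:R))).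
under eq_bigr => j _ do under eq_bigr => i _ do rewrite (Ex_sum mu (fun l y => ((y i == j)%:R * (y l == j)%:R))).
apply: (@le_trans _ _ (\sum_j \sum_(i < n) \sum_(l < n) mu j * ((i == l)%:R + c))).
  apply: ler_sum => j _; apply: ler_sum => i _; apply: ler_sum => l _.
  case: (eqVneq i l) => [<-|il].
    have -> : (fun y : sample n m => ((y i == j)%:R * (y i == j)%:R : R)) = (fun y => (y i == j)%:R).
      by apply: funext => y; case: (_ == _); rewrite ?mulr1 ?mulr0.
    rewrite Ex_ind //; change ((true)%:R : R) with (1:R); have := u0 j; have := c0; nra.
  rewrite Ex_pair //; change ((false)%:R : R) with (0:R); rewrite add0r expr2; apply: ler_wpM2l => //.
rewrite exchange_big /=.
have -> : \sum_(i < n) \sum_j \sum_(l < n) mu j * ((i == l)%:R + c) = \sum_(i < n) (1 + n%:R * c).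
  apply: eq_bigr => i _; rewrite exchange_big /= (bigD1 i) //= eqxx.
  rewrite -mulr_suml u1 mul1r.
  under eq_bigr => l /negbTE il do rewrite -mulr_suml u1 mul1r eq_sym il add0r.
  rewrite sumr_const cardC1 card_ord.
  case: n n0 => // n' _ /=; rewrite -[n'.+1]addn1 natrD -mulr_natr; ring.
rewrite sumr_const card_ord -mulr_natr; rewrite le_eqVlt; apply/orP; left; apply/eqP; ring.
Qed.


Hypothesis hk : 6 * n%:R ^+ 2 * c <= (k * (k - 1))%:R.

Lemma err0 : pi s0 ^+ k / 2 <= prob_event pi mu pi (fun (x y z : sample n m) => 0 <= Fstat R x y z).
Proof.
case: dpi => p0 p1; case: dmu => u0 u1.
have n0R : 0 < n%:R :> R by rewrite ltr0n.
pose B : R := 3 * n%:R ^+ 2 * c.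
have B0 : 0 < B by rewrite /B !mulr_gt0 // exprn_gt0.
pose V x y z := SY y - n%:R + 2 * SZX x z.
rewrite T3_event.
apply: (@le_trans _ _ (T3 (fun x y z => Aind x * (1 - V x y z / (2 * B))))); last first.
  apply: T3_le => x y z.
  have V0 : 0 <= V x y z.
    by rewrite /V; have := SY_ge y; have := SZX_ge0 x z; lra.
  have VB : 0 <= V x y z / (2 * B) by apply: divr_ge0 => //; lra.
  case: (Aind01 x) => [->|[hA _]]; first by rewrite mul0r ler0n.
  rewrite hA mul1r; case: (boolP (0 <= Fstat R x y z)) => hF; first by rewrite /= ; lra.
  rewrite /=; have := F_lb y z hA; rewrite -/(V x y z) => hl.
  have hF' : Fstat R x y z < 0 by rewrite ltNge.
  have : n%:R ^+ 2 * Fstat R x y z < 0 by rewrite pmulr_rlt0 // exprn_gt0.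
  move=> h2; have : 2 * B < V x y z by move: hk; rewrite /B; lra.
  move=> h3; rewrite subr_le0 ler_pdivlMr; last by lra.
  by rewrite mul1r ltW.
pose G (x y z : sample n m) := 1 * (Aind x * 1 * 1) + (- (2 * B)^-1) *
   (1 * (Aind x * (1 * SY y + (- n%:R) * 1) * 1) +
    2 * \sum_j ((Aind x * (occ x j)%:R) * 1 * (occ z j)%:R)).
have eG : (fun x y z => Aind x * (1 - V x y z / (2 * B))) = G.
  apply: funext => x; apply: funext => y; apply: funext => z; rewrite /G.
  have -> : \sum_j ((Aind x * (occ x j)%:R) * 1 * (occ z j)%:R) = Aind x * SZX x z.
    by rewrite /SZX mulr_sumr; apply: eq_bigr => j _; ring.
  rewrite /V; field; lra.
rewrite eG /G.
rewrite (T3_lin 1 (- (2 * B)^-1) (fun x y z => Aind x * 1 * 1)).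
rewrite (T3_lin 1 2 (fun x y z => Aind x * (1 * SY y + (- n%:R) * 1) * 1)).
rewrite (T3_sum (fun j x y z => (Aind x * (occ x j)%:R) * 1 * (occ z j)%:R)).
rewrite (T3_prod Aind (fun _ => 1) (fun _ => 1)).
rewrite (T3_prod Aind (fun y => 1 * SY y + (- n%:R) * 1) (fun _ => 1)).
under eq_bigr => j _ do rewrite (T3_prod (fun x => Aind x * (occ x j)%:R) (fun _ => 1) (fun z => (occ z j)%:R)).
rewrite Ex_lin !Ex1 // Ex_A.
under eq_bigr => j _ do rewrite Ex_occ.
set EA := pi s0 ^+ k.
have EA0 : 0 <= EA by rewrite exprn_ge0.
have hS : \sum_j Ex pi (fun x => Aind x * (occ x j)%:R) * 1 * (n%:R * pi j) <=
          n%:R * c * (n%:R * EA).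
  rewrite /EA -Ex_A -Ex_Aocc mulr_sumr; apply: ler_sum => j _.
  have e0 : 0 <= Ex pi (fun x => Aind x * (occ x j)%:R).
    by apply: Ex_ge0 => // x; apply: mulr_ge0 => //; apply: Aind_ge0.
  rewrite mulr1 mulrC; apply: ler_wpM2r => //; apply: ler_wpM2l => //; exact: ltW.
have hY := Ex_SY.
have : EA * (Ex mu SY - n%:R) <= EA * (n%:R ^+ 2 * c).
  by apply: ler_wpM2l => //; lra.
have iB : 0 < (2 * B)^-1 by rewrite invr_gt0; lra.
move=> h1.
set S := \sum_j _ in hS *.
set Y := Ex mu SY in h1 hY *.
have key : EA * (1 * Y + (- n%:R) * 1) * 1 + 2 * S <= EA * B.
  rewrite /B; have : S <= n%:R ^+ 2 * c * EA by rewrite expr2; lra.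
  lra.
have : (2 * B)^-1 * (EA * (1 * Y + - n%:R * 1) * 1 + 2 * S) <= (2 * B)^-1 * (EA * B).
  by apply: ler_wpM2l => //; lra.
have -> : (2 * B)^-1 * (EA * B) = EA / 2 by field; lra.
lra.
Qed.

End Main.


Lemma sum_lt (R : realType) m h (a : R) : (h <= m)%N ->
  \sum_(j < m) (if (j < h)%N then a else 0) = h%:R * a.
Proof.
move=> hm; rewrite -big_mkcond /= -(big_ord_widen m (fun _ => a) hm).
by rewrite sumr_const card_ord mulr_natl.
Qed.

Lemma sum_ge (R : realType) m h (a : R) : (h <= m)%N ->
  \sum_(j < m) (if (h <= j)%N then a else 0) = (m - h)%:R * a.
Proof.
move=> hm.
have -> : \sum_(j < m) (if (h <= j)%N then a else 0) =
   \sum_(j < m) a - \sum_(j < m) (if (j < h)%N then a else 0).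
  rewrite -sumrB; apply: eq_bigr => j _; rewrite leqNgt; case: (j < h)%N; rewrite /=; ring.
by rewrite sum_lt // sumr_const card_ord natrB // -mulr_natl; ring.
Qed.

Lemma pair_exists (R : realType) m : (2 <= m)%N ->
  exists (pi mu : 'I_m -> R) (s0 : 'I_m),
  is_distr pi /\ is_distr mu /\ \sum_j `|mu j - pi j| = 2 /\
      (forall j, pi j <= 3 / m%:R) /\ (forall j, mu j <= 3 / m%:R) /\ m%:R^-1 <= pi s0.
Proof.
move=> m2; pose h := (m %/ 2)%N.
have h1 : (1 <= h)%N by rewrite /h; lia.
have hm : (h <= m)%N by rewrite /h; lia.
have h3 : (m <= 3 * h)%N by rewrite /h; lia.
have mh : (h <= m - h)%N by rewrite /h; lia.
have hR : 0 < h%:R :> R by rewrite ltr0n.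
have mhR : 0 < (m - h)%:R :> R by rewrite ltr0n; lia.
have mR : 0 < m%:R :> R by rewrite ltr0n; lia.
pose pi := fun j : 'I_m => if (j < h)%N then (h%:R : R)^-1 else 0.
pose mu := fun j : 'I_m => if (h <= j)%N then ((m - h)%:R : R)^-1 else 0.
have s0lt : (0 < m)%N by lia.
exists pi, mu, (Ordinal s0lt).
have b1 : (h%:R : R)^-1 <= 3 / m%:R.
  rewrite ler_pdivlMr // mulrC ler_pdivrMr //.
  by rewrite -[3]/(3%:R) -natrM ler_nat.
have b2 : ((m - h)%:R : R)^-1 <= (h%:R)^-1.
  by rewrite lef_pV2 ?posrE // ler_nat.
split; [|split; [|split; [|split; [|split]]]].
- split; first by move=> j; rewrite /pi; case: ifP => _ //; rewrite invr_ge0 ltW.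
  by rewrite /pi sum_lt // mulfV // gt_eqF.
- split; first by move=> j; rewrite /mu; case: ifP => _ //; rewrite invr_ge0 ltW.
  by rewrite /mu sum_ge // mulfV // gt_eqF.
- have -> : \sum_j `|mu j - pi j| = \sum_j pi j + \sum_j mu j.
    rewrite -big_split; apply: eq_bigr => j _; rewrite /pi /mu leqNgt.
    case: (j < h)%N => /=; rewrite ?sub0r ?subr0 ?normrN ?add0r ?addr0 gtr0_norm // invr_gt0 //.
  rewrite /pi /mu sum_lt // sum_ge // !mulfV ?gt_eqF //.
- by move=> j; rewrite /pi; case: ifP => _ //; rewrite divr_ge0 // ltW.
- move=> j; rewrite /mu; case: ifP => _; first exact: le_trans b2 b1.
  by rewrite divr_ge0 // ltW.
- by rewrite /pi /= h1 lef_pV2 ?posrE // ler_nat.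
Qed.

Lemma total1 (R : realType) m L (p : 'I_m -> R) : is_distr p -> \sum_(x : sample L m) seq_prob p x = 1.
Proof. by move=> d; rewrite -(Ex1 L d); apply: eq_bigr => x _; rewrite mulr1. Qed.

Lemma pe_bounds (R : realType) m N n (pi mu nu : 'I_m -> R) E :
  is_distr pi -> is_distr mu -> is_distr nu ->
  0 <= @prob_event R m N n pi mu nu E <= 1.
Proof.
move=> dp du dn; have [p0 _] := dp; have [u0 _] := du; have [v0 _] := dn.
apply/andP; split.
  apply: sumr_ge0 => x _; apply: sumr_ge0 => y _; apply: sumr_ge0 => z _.
  by case: (E x y z) => //; rewrite !mulr_ge0 // seq_prob_ge0.
apply: (@le_trans _ _ (\sum_(x : sample N m) \sum_(y : sample N m) \sum_(z : sample n m)
   (seq_prob pi x * seq_prob mu y * seq_prob nu z))).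
  apply: ler_sum => x _; apply: ler_sum => y _; apply: ler_sum => z _.
  by case: (E x y z) => //; rewrite !mulr_ge0 // seq_prob_ge0.
rewrite le_eqVlt; apply/orP; left; apply/eqP; rewrite -(total1 N dp).
apply: eq_bigr => x _.
rewrite -[RHS]mulr1 -(total1 N du) mulr_sumr; apply: eq_bigr => y _.
by rewrite -[RHS]mulr1 -(total1 n dn) mulr_sumr.
Qed.

Lemma avg_bounds (R : realType) (N n : nat -> nat) (phi : classifier N n) m (pi mu : 'I_m -> R) :
  is_distr pi -> is_distr mu -> 0 <= avg_err phi pi mu <= 1.
Proof.
move=> dp du; rewrite /avg_err.
have /andP[a1 a2] := pe_bounds (fun x y z => phi m x y z) dp du dp.
have /andP[b1 b2] := pe_bounds (fun x y z => ~~ phi m x y z) dp du du.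
apply/andP; split; lra.
Qed.

Lemma Pe_bounds (R : realType) (eps cbar : R) (nn : nat -> nat) m k :
  (2 <= m)%N -> eps <= 2 -> 3 <= cbar -> (0 < nn m)%N -> (k <= nn m)%N ->
  6 * (nn m)%:R ^+ 2 * (3 / m%:R) <= (k * (k - 1))%:R :> R ->
  (m%:R^-1)^+k / 4 <= Pe eps cbar (@phiF R nn nn) m /\ Pe eps cbar (@phiF R nn nn) m <= 1.
Proof.
move=> m2 e2 c3 n0 kn hk.
have [pi [mu [s0 [dp [du [l1 [hp [hu hs]]]]]]]] := pair_exists R m2.
have mR : 0 < m%:R :> R by rewrite ltr0n; lia.
have c3m : 3 / m%:R <= cbar / m%:R by rewrite ler_pM2r // invr_gt0.
have adm : admissible eps cbar pi mu.
  split => //; first by rewrite l1.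
  - by move=> j; apply: le_trans (hp j) c3m.
  - by move=> j; apply: le_trans (hu j) c3m.
set S := [set e : R | exists pi mu : 'I_m -> R, admissible eps cbar pi mu /\ e = avg_err (@phiF R nn nn) pi mu].
have ubS : ubound S 1.
  move=> e [p [u [[dp' du' _ _ _] ->]]]; by have /andP[] := avg_bounds (@phiF R nn nn) dp' du'.
have Sa : S (avg_err (@phiF R nn nn) pi mu) by exists pi, mu.
split; last first.
  by apply: ge_sup => //; exists (avg_err (@phiF R nn nn) pi mu).
apply: (@le_trans _ _ (avg_err (@phiF R nn nn) pi mu)); last first.
  by apply: (ub_le_sup _ Sa); exists 1.
have c0 : 0 < 3 / m%:R :> R by rewrite divr_gt0.
have E0 := err0 s0 dp du hp hu kn n0 c0 hk.
have /andP[b1 _] := pe_bounds (fun x y z => ~~ @phiF R nn nn m x y z) dp du du.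
have hs' : (m%:R^-1)^+k <= pi s0 ^+ k.
  have i0 : 0 <= m%:R^-1 :> R by rewrite invr_ge0 ltW.
  by apply: lerXn2r => //; rewrite nnegrE // (le_trans i0 hs).
rewrite /avg_err.
have : pi s0 ^+ k / 2 <= prob_event pi mu pi (fun x y z => @phiF R nn nn m x y z) by exact: E0.
lra.
Qed.


Lemma choose_k n m : (72 <= m)%N -> (2 <= n)%N ->
  exists k, [/\ (2 <= k)%N, (k <= n)%N, (18 * n ^ 2 <= (k - 1) ^ 2 * m)%N
             & ((k - 2) ^ 2 * m < 18 * n ^ 2)%N].
Proof.
move=> m72 n2.
have Pn : (18 * n ^ 2 <= (n - 1) ^ 2 * m)%N.
  have : (n ^ 2 <= 4 * (n - 1) ^ 2)%N by nia.
  nia.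
have [k Pk kmin] := find_ex_minn (ex_intro (fun k => (18 * n ^ 2 <= (k - 1) ^ 2 * m)%N) n Pn).
have k2 : (2 <= k)%N.
  case: k Pk kmin => [|[|k]] //= Pk _; move: Pk; rewrite ?sub0n ?subnn /=; nia.
exists k; split => //; first exact: kmin.
rewrite ltnNge; apply/negP => h.
have := kmin (k - 1)%N; rewrite (_ : (k - 1 - 1 = k - 2)%N); last by lia.
move=> /(_ h); lia.
Qed.

Lemma real_bound (R : realType) (e M Nn K L lm q u : R) :
  0 < e -> 0 <= q -> 2 <= K -> 0 <= L -> 0 <= lm -> lm <= 2 * L ->
  (K - 2) ^+ 2 * q <= 18 -> u = L ^+ 2 * q ->
  72 * u < (e / 3) ^+ 2 -> 4 * (u + q) < e / 3 -> ln 4 * q < e / 3 ->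
  (K * lm + ln 4) * q < e.
Proof.
move=> e0 q0 K2 L0 lm0 lmL hK hu h1 h2 h3.
pose a := (K - 2) * (2 * L) * q.
have a0 : 0 <= a by rewrite /a !mulr_ge0 //; lra.
have a2 : a ^+ 2 <= 72 * u.
  have -> : a ^+ 2 = 4 * (L ^+ 2 * q) * ((K - 2) ^+ 2 * q) by rewrite /a; ring.
  rewrite hu; have : 0 <= 4 * (L ^+ 2 * q) by rewrite !mulr_ge0 // sqr_ge0.
  move=> h; have := ler_wpM2l h hK; lra.
have ae : a < e / 3.
  rewrite ltNge; apply/negP => h.
  have : (e / 3) ^+ 2 <= a ^+ 2 by apply: lerXn2r => //; rewrite nnegrE; lra.
  lra.
have b1 : (K - 2) * lm * q <= a.
  rewrite /a; apply: ler_wpM2r => //; apply: ler_wpM2l => //; lra.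
have b2 : L * q <= u + q.
  rewrite hu; case: (lerP L 1) => hL.
    have := ler_wpM2r q0 hL; have : 0 <= L ^+ 2 * q by rewrite mulr_ge0 // sqr_ge0.
    lra.
  have : L <= L ^+ 2 by rewrite expr2 ler_peMl //; lra.
  move=> hL2; have := ler_wpM2r q0 hL2; lra.
have b3 : 2 * lm * q <= 4 * (L * q).
  have := ler_wpM2r q0 lmL; lra.
have -> : (K * lm + ln 4) * q = (K - 2) * lm * q + 2 * lm * q + ln 4 * q by ring.
lra.
Qed.

Lemma Pe_core (R : realType) (n : nat -> nat) (eps cbar : R) m :
  (72 <= m)%N -> (m < n m ^ 2)%N -> eps <= 2 -> 3 <= cbar ->
  exists k, [/\ (2 <= k)%N, ((k - 2) ^ 2 * m < 18 * n m ^ 2)%N,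
     (m%:R^-1)^+k / 4 <= Pe eps cbar (@phiF R n n) m & Pe eps cbar (@phiF R n n) m <= 1].
Proof.
move=> m72 mn e2 c3.
have n2 : (2 <= n m)%N by nia.
have [k [k2 kn hk1 hk2]] := choose_k m72 n2.
exists k.
have mR : 0 < m%:R :> R by rewrite ltr0n; lia.
have hk : 6 * (n m)%:R ^+ 2 * (3 / m%:R) <= (k * (k - 1))%:R :> R.
  have -> : 6 * (n m)%:R ^+ 2 * (3 / m%:R) = (18 * n m ^ 2)%:R / m%:R :> R.
    by rewrite natrM natrX; rewrite /=; field; lra.
  rewrite ler_pdivrMr // -natrM ler_nat; apply: (leq_trans hk1).
  rewrite leq_mul2r; apply/orP; right; rewrite expnS expn1 leq_mul2r; apply/orP; right; lia.
have m2 : (1 < m)%N by lia.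
have [lo hi] := Pe_bounds (nn:=n) (R:=R) m2 e2 c3 (leq_trans (isT : (0 < 2)%N) n2) kn hk.
by split.
Qed.

Lemma ln_lb (R : realType) (M P : R) k : 1 <= M -> M^-1 ^+ k / 4 <= P ->
  - (k%:R * ln M + ln 4) <= ln P.
Proof.
move=> M1 lo.
have M0 : 0 < M by lra.
have i0 : 0 < M^-1 by rewrite invr_gt0.
have pos1 : 0 < M^-1 ^+ k / 4 by apply: divr_gt0 => //; apply: exprn_gt0.
have P0 : 0 < P by apply: lt_le_trans lo.
have := lo; rewrite -ler_ln ?posrE //.
rewrite lnM ?posrE ?exprn_gt0 ?invr_gt0 //.
rewrite lnXn // lnV ?posrE // lnV ?posrE //.
move=> h.
move: h; rewrite mulNrn -mulr_natl; lra.

Qed.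

Unset Implicit Arguments.

Theorem theorem4 (R : realType) (n : nat -> nat) :
  (forall m, (0 < n m)%N) ->
  (fun m => (n m)%:R / m%:R : R^o) @ \oo --> 0%R ->
  (fun m => m%:R / (n m)%:R ^+ 2 : R^o) @ \oo --> 0%R ->
  (fun m => m%:R * (ln ((n m)%:R : R)) ^+ 2 / (n m)%:R ^+ 2 : R^o) @ \oo --> 0%R ->
  forall eps : R, 0 < eps < 2 ->
  exists c0 : R, forall cbar : R, c0 <= cbar ->
    J eps cbar (@phiF R n n) = 0%E.
Proof.
move=> hn0 _ ht hu eps /andP[e0 e2].
exists 3 => cbar c3.
set u := log_err_rate eps cbar (@phiF R n n).
suff uc : u @ \oo --> 0%E by rewrite /J -/u (cvg_limn_einf_sup uc).2 oppe0.
have hq1 := cvgr0_norm_lt _ ht.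
have hu1 := cvgr0_norm_lt _ hu.
have big : \forall m \near \oo, (72 <= m)%N /\ (m < n m ^ 2)%N.
  near=> m; split; first by near: m; exact: nbhs_infty_ge.
  have : `|m%:R / (n m)%:R ^+ 2 : R| < 1 by near: m; apply: hq1.
  have nR : 0 < (n m)%:R ^+ 2 :> R by rewrite exprn_gt0 // ltr0n.
  rewrite ger0_norm ?divr_ge0 // ?ltW // ltr_pdivrMr // mul1r -natrX ltr_nat //.
pose ratio m := (ln (Pe eps cbar (@phiF R n n) m) / rate R n n m).
have uE : \forall m \near \oo, u m = (ratio m)%:E.
  near=> m; have [m72 mn] : (72 <= m)%N /\ (m < n m ^ 2)%N by near: m; exact: big.
  have [k [k2 hk lo hi]] := Pe_core (R:=R) (n:=n) (cbar:=cbar) m72 mn (ltW e2) c3.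
  have mR : 0 < m%:R :> R by rewrite ltr0n; lia.
  have P0 : 0 < Pe eps cbar (@phiF R n n) m.
    apply: lt_le_trans lo; apply: divr_gt0 => //; apply: exprn_gt0; rewrite invr_gt0 //.
  by rewrite /u /log_err_rate P0.
apply: cvg_EFin.
  by near=> m; have -> : u m = (ratio m)%:E by near: m; exact: uE.
apply/cvgr0Pnorm_lt => e e_gt0.
have l4 : 0 <= ln (4 : R) by apply: ln_ge0; lra.
have l41 : 0 < 3 * (ln (4 : R) + 1) by lra.
near=> m.
have um : u m = (ratio m)%:E by near: m; exact: uE.
have [m72 mn] : (72 <= m)%N /\ (m < n m ^ 2)%N by near: m; exact: big.
have [k [k2 hk lo hi]] := Pe_core (R:=R) (n:=n) (cbar:=cbar) m72 mn (ltW e2) c3.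
have hqa : `|m%:R / (n m)%:R ^+ 2 : R| < e / 24 by near: m; apply: hq1; lra.
have hqb : `|m%:R / (n m)%:R ^+ 2 : R| < e / (3 * (ln 4 + 1)) by near: m; apply: hq1; apply: divr_gt0 => //; exact: l41.
have hua : `|m%:R * (ln ((n m)%:R : R)) ^+ 2 / (n m)%:R ^+ 2| < e / 24 by near: m; apply: hu1; lra.
have hub : `|m%:R * (ln ((n m)%:R : R)) ^+ 2 / (n m)%:R ^+ 2| < (e / 3) ^+ 2 / 72.
  by near: m; apply: hu1; apply: divr_gt0 => //; apply: exprn_gt0; apply: divr_gt0.
have mR : 1 <= m%:R :> R by rewrite ler1n (leq_trans _ m72).
have nR : 1 <= (n m)%:R :> R by rewrite ler1n.
have nR2 : 0 < (n m)%:R ^+ 2 :> R by rewrite exprn_gt0 // (lt_le_trans ltr01 nR).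
rewrite /= um /=.
set P := Pe eps cbar (@phiF R n n) m in lo hi *.
set q := m%:R / (n m)%:R ^+ 2 : R.
have q0 : 0 <= q by rewrite divr_ge0 //; lra.
have rE : rate R n n m = q^-1.
  rewrite /rate /q (_ : (n m * n m = n m ^ 2)%N); last by rewrite expnS expn1.
  by rewrite minnn natrX invf_div.
have P0 : 0 < P.
  apply: lt_le_trans lo; apply: divr_gt0 => //; apply: exprn_gt0; rewrite invr_gt0; lra.
have lP0 : ln P <= 0 by apply: ln_le0.
have lPlo : - (k%:R * ln (m%:R : R) + ln 4) <= ln P by apply: ln_lb.
rewrite /ratio rE invrK.
have -> : `|ln P * q| = - ln P * q.
  by rewrite ler0_norm ?mulNr // mulr_le0_ge0.
apply: (@le_lt_trans _ _ ((k%:R * ln (m%:R : R) + ln 4) * q)).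
  by apply: ler_wpM2r => //; lra.
set U := m%:R * (ln ((n m)%:R : R)) ^+ 2 / (n m)%:R ^+ 2 in hua hub.
have U0 : 0 <= U by apply: divr_ge0; [apply: mulr_ge0; [exact: ler0n|exact: sqr_ge0]|exact: ltW].
rewrite ger0_norm // in hqa hqb; rewrite ger0_norm // in hua hub.
apply: (@real_bound R e (m%:R) ((n m)%:R) (k%:R) (ln ((n m)%:R)) (ln (m%:R)) q U) => //.
- by rewrite ler_nat.
- by apply: ln_ge0.
- by apply: ln_ge0.
- have hmn : (m%:R : R) <= (n m)%:R ^+ 2 by rewrite -natrX ler_nat ltnW.
  have m0 : 0 < m%:R :> R by apply: lt_le_trans mR.
  have : ln (m%:R : R) <= ln ((n m)%:R ^+ 2) by rewrite ler_ln ?posrE.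
  rewrite lnXn; last by apply: lt_le_trans nR.
  by rewrite mulr2n mulr_natl.
- rewrite -natrB // -natrX /q mulrA ler_pdivrMr // -!natrX -!natrM ler_nat.
  by rewrite mulnC; apply: ltnW; rewrite mulnC.
- have nz : (n m)%:R ^+ 2 != 0 :> R by rewrite gt_eqF.
  by rewrite /U /q; ring.
- by move: hub; rewrite ltr_pdivlMr // mulrC.
- by rewrite /q; clear -hua hqa e_gt0; lra.
- have : ln 4 * q <= (ln 4 + 1) * q by apply: ler_wpM2r => //; rewrite lerDl.
  have : (ln 4 + 1) * q < e / 3.
    rewrite mulrC -ltr_pdivlMr; last by apply: (lt_le_trans ltr01); rewrite lerDr.
    move: hqb; rewrite /q => h; apply: (lt_le_trans h); rewrite le_eqVlt; apply/orP; left; apply/eqP.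
    have l1 : ln (4:R) + 1 != 0 by rewrite gt_eqF //; apply: (lt_le_trans ltr01); rewrite lerDr.
    by field; rewrite l1.
  by clear; move=> *; lra.
Unshelve. all: by end_near.
Qed.
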